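(* Assume Assumption A-0 holds, let $T\ge1$, let $\psi_0,\dots,\psi_T$ be bounded measurable functions on $\mathbb{R}^d$ and $\boldsymbol\lambda=(\lambda_0,\dots,\lambda_T)\in\mathbb{R}^{T+1}$. Set $\rho_{T-1}=\lambda_{T-1}\psi_{T-1}+\frac{\lambda_T}{\kappa_T}L_T(\psi_T-m_T(\psi_T))$ and $\tilde{\boldsymbol\lambda}=(\lambda_0,\dots,\lambda_{T-2},1)\in\mathbb{R}^T$. Then $$\langle\tilde{\boldsymbol\lambda},\mathbf V_{T-1}(\psi_0,\dots,\psi_{T-2},\rho_{T-1})\,\tilde{\boldsymbol\lambda}\rangle=\langle\boldsymbol\lambda,\mathbf V_T(\psi_0,\dots,\psi_T)\,\boldsymbol\lambda\rangle-\lambda_T^2\sigma_T^2(\psi_T).$$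
   Context: Hidden Markov model with Markov chain $(X_t)$ on $\mathbb{R}^d$ having initial density $a_0$ and transition densities $a_t(x,x')$ w.r.t. a measure $\mu$, and observation densities $b_t(x,y)$; observations $y_1,\dots,y_T$ fixed. Filter density: $f_{0|0}=a_0$, $f_{t|t}(x)\propto b_t(x,y_t)\int f_{t-1|t-1}(u)a_t(u,x)\mu(du)$ (normalized). Notation: $m_t(\psi)=\int\psi f_{t|t}d\mu$; $L_t\psi(x)=\int a_t(x,u)b_t(u,y_t)\psi(u)\mu(du)$; $\mathbb{1}\equiv1$. Assumption A-0: for every $t\ge1$, $\sup_xL_t\mathbb{1}(x)<\infty$ and $L_t\mathbb{1}(x)>0$ for all $x$; $\kappa_t:=\int L_t\mathbb{1}\,f_{t-1|t-1}d\mu>0$. Variance quantities: $\sigma_t^2(\psi)=\int(\psi-m_t(\psi))^2f_{t|t}d\mu$; $V_0(\psi)=\sigma_0^2(\psi)$, $V_t(\psi)=\sigma_t^2(\psi)+\kappa_t^{-2}V_{t-1}(L_t\psi-m_t(\psi)L_t\mathbb{1})$; $V_{t,t}(\psi,\phi)=\frac12(V_t(\psi+\phi)-V_t(\psi)-V_t(\phi))$; for $r<t$, $V_{r,t}(\psi_r,\psi_t)=\kappa_t^{-1}V_{r,t-1}(\psi_r,L_t(\psi_t-m_t(\psi_t)))$, $V_{t,r}=V_{r,t}$ (with arguments swapped). $\mathbf V_T(\psi_{0:T})=(V_{s,t}(\psi_s,\psi_t))_{0\le s,t\le T}$. *)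

(* Defs.v *)
From HB Require Import structures.
From mathcomp Require Import all_boot all_order all_algebra.
From mathcomp Require Import all_classical all_reals all_analysis.
Set Implicit Arguments. Unset Strict Implicit. Unset Printing Implicit Defensive.
Import Order.TTheory GRing.Theory Num.Theory.
Local Open Scope classical_set_scope.
Local Open Scope ring_scope.

Section HMM.
Variables (R : realType) (n : nat).
Notation X := (n.-tuple R).
Variable (mu : {measure set X -> \bar R}).
Variables (a0 : X -> R) (a : nat -> X -> X -> R).
Variables (Y : Type) (b : nat -> X -> Y -> R) (y : nat -> Y).

Definition Int (f : X -> R) : R := Rintegral mu setT f.

Definition Lop (t : nat) (psi : X -> R) : X -> R :=
  fun x => Int (fun u => a t x u * b t u (y t) * psi u).

Definition onefun : X -> R := fun=> 1.

Fixpoint filt (t : nat) : X -> R :=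
  match t with
  | 0 => a0
  | t'.+1 =>
      let g := fun x => b t'.+1 x (y t'.+1) * Int (fun u => filt t' u * a t'.+1 u x) in
      fun x => g x / Int g
  end.

Definition mt (t : nat) (psi : X -> R) : R := Int (fun x => psi x * filt t x).

(* kappa_t = \int L_t 1 f_{t-1|t-1} dmu  (meaningful for t >= 1) *)
Definition kappa (t : nat) : R := Int (fun x => Lop t onefun x * filt t.-1 x).

Definition sigma2 (t : nat) (psi : X -> R) : R :=
  Int (fun x => (psi x - mt t psi) ^+ 2 * filt t x).

Fixpoint Vt (t : nat) (psi : X -> R) : R :=
  match t with
  | 0 => sigma2 0 psi
  | t'.+1 => sigma2 t'.+1 psi +
      (kappa t'.+1)^-2 * Vt t' (fun x => Lop t'.+1 psi x - mt t'.+1 psi * Lop t'.+1 onefun x)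
  end.

Definition Vtt (t : nat) (psi phi : X -> R) : R :=
  (Vt t (psi \+ phi) - Vt t psi - Vt t phi) / 2.

(* Vup r k psi_r psi_t = V_{r, r+k}(psi_r, psi_t) *)
Fixpoint Vup (r k : nat) (psir psit : X -> R) : R :=
  match k with
  | 0 => Vtt r psir psit
  | k'.+1 => (kappa (r + k'.+1))^-1 *
      Vup r k' psir (Lop (r + k'.+1) (fun x => psit x - mt (r + k'.+1) psit))
  end.

Definition Vst (s t : nat) (psis psit : X -> R) : R :=
  if (s <= t)%N then Vup s (t - s) psis psit else Vup t (s - t) psit psis.

Definition Vmat (T : nat) (psi : nat -> X -> R) : 'M[R]_(T.+1) :=
  \matrix_(s < T.+1, t < T.+1) Vst s t (psi s) (psi t).

Definition qform (T : nat) (M : 'M[R]_(T.+1)) (lam : 'rV[R]_(T.+1)) : R :=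
  (lam *m (M *m lam^T)) ord0 ord0.

End HMM.

(* Main.v *)
Require Import Defs.
From HB Require Import structures.
From mathcomp Require Import all_boot all_order all_algebra.
From mathcomp Require Import all_classical all_reals all_analysis measurable_realfun.
From mathcomp Require Import ring lra.
Import Order.TTheory GRing.Theory Num.Theory.
Local Open Scope classical_set_scope.
Local Open Scope ring_scope.

Section Dev.
Variables (R : realType) (n : nat).
Local Notation X := (n.-tuple R).
Variable (mu : {measure set X -> \bar R}).
Variables (a0 : X -> R) (a : nat -> X -> X -> R).
Variables (Y : Type) (b : nat -> X -> Y -> R) (y : nat -> Y).
Hypothesis smu : sigma_finite setT mu.
Hypothesis ma0 : measurable_fun setT a0.
Hypothesis a00 : forall x, 0 <= a0 x.
Hypothesis ia0 : (\int[mu]_x (a0 x)%:E = 1)%E.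
Hypothesis ha : forall t, (1 <= t)%N ->
  measurable_fun setT (fun p : X * X => a t p.1 p.2) /\ (forall x u, 0 <= a t x u).
Hypothesis hb : forall t, (1 <= t)%N ->
  measurable_fun setT (fun x => b t x (y t)) /\ (forall x, 0 <= b t x (y t)).
Hypothesis hL : forall t, (1 <= t)%N ->
  (exists M : R, forall x, Lop mu a b y t (@onefun R n) x <= M) /\
  (forall x, 0 < Lop mu a b y t (@onefun R n) x).

Definition mu' := fun A => mu A.
HB.instance Definition _ := Measure.copy mu' mu.
HB.instance Definition _ := @Measure_isSigmaFinite.Build _ _ _ mu' smu.

Local Notation Int := (Int mu).
Local Notation L := (Lop mu a b y).
Local Notation one := (@onefun R n).

Definition intg (f : X -> R) := mu.-integrable setT (EFin \o f).
Definition BM (f : X -> R) := measurable_fun setT f /\ exists M : R, forall x, `|f x| <= M.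

Lemma intg_meas f : intg f -> measurable_fun setT f.
Proof. by move=> /measurable_int /measurable_EFinP. Qed.

Lemma intgZ c f : intg f -> intg (fun x => c * f x).
Proof.
move=> hf; apply: eq_integrable (integrableZl _ c hf) => //.
Qed.

Lemma intgD f g : intg f -> intg g -> intg (fun x => f x + g x).
Proof.
move=> hf hg; apply: eq_integrable (integrableD _ hf hg) => //.
Qed.

Lemma Int_lin c1 c2 f g : intg f -> intg g ->
  Int (fun x => c1 * f x + c2 * g x) = c1 * Int f + c2 * Int g.
Proof.
move=> hf hg; rewrite /Int RintegralD //; try exact: intgZ.
by rewrite !RintegralZl.
Qed.

Lemma intg_bm phi h : BM phi -> intg h -> intg (fun x => h x * phi x).
Proof.
move=> [mphi [M hM]] hh.
have hM' := intgZ M h hh; rewrite /intg in hM' *.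
apply: (le_integrable measurableT _ _ hM') => //.
  apply/measurable_EFinP; apply: measurable_funM => //; exact: intg_meas.
move=> x _ /=; rewrite lee_fin !normrM mulrC.
apply: ler_wpM2r => //; apply: le_trans (hM x) _; exact: ler_norm.
Qed.

Lemma Int_meas (F : X * X -> R) : measurable_fun setT F -> (forall p, 0 <= F p) ->
  measurable_fun setT (fun x => Int (fun u => F (x, u))).
Proof.
move=> mF F0; rewrite /Defs.Int /Rintegral.
apply: measurableT_comp => //.
have mF' : measurable_fun setT (EFin \o F) by exact/measurable_EFinP.
have F0' : forall p, (0 <= (EFin \o F) p)%E by move=> p; rewrite lee_fin.
exact: (@measurable_fun_fubini_tonelli_F _ _ _ _ _ mu' _ mF' F0').
Qed.


Lemma ker_meas t x : (1 <= t)%N -> measurable_fun setT (fun u => a t x u * b t u (y t)).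
Proof.
move=> t1; have [ma _] := ha _ t1; have [mb _] := hb _ t1.
apply: measurable_funM => //.
exact: (measurableT_comp ma (pair1_measurable x)).
Qed.

Lemma intg_kern t x : (1 <= t)%N -> intg (fun u => a t x u * b t u (y t)).
Proof.
move=> t1; have [_ a0'] := ha _ t1; have [_ b0] := hb _ t1; have [_ Lpos] := hL _ t1.
apply/integrableP; split; first by apply/measurable_EFinP; exact: ker_meas.
have := Lpos x; rewrite /Lop /Defs.Int /Rintegral /onefun.
set I := integral _ _ _.
have -> : (\int[mu]_(v in setT) `|(EFin \o (fun w => (a t x w * b t w (y t))%R)) v| = I)%E.
  by apply: eq_integral => u _; rewrite /= mulr1 ger0_norm // mulr_ge0.
have I0 : (0 <= I)%E by apply: integral_ge0 => w _; rewrite lee_fin !mulr_ge0.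
move=> hpos; rewrite ltNge leye_eq; apply/negP => /eqP hI.
by move: hpos; rewrite hI /= ltxx.
Qed.


Lemma BM_lin c1 c2 f g : BM f -> BM g -> BM (fun x => c1 * f x + c2 * g x).
Proof.
move=> [mf [Mf hf]] [mg [Mg hg]]; split.
  by apply: measurable_funD; apply: measurable_funM.
exists (`|c1| * Mf + `|c2| * Mg) => x.
apply: (le_trans (ler_normD _ _)); rewrite !normrM.
by apply: lerD; apply: ler_wpM2l.
Qed.

Lemma BM_cst c : BM (fun=> c).
Proof. by split => //; exists `|c|. Qed.

Lemma BM_one : BM one.
Proof. exact: BM_cst. Qed.

Lemma BM_ext f g : f =1 g -> BM f -> BM g.
Proof. by move=> /funext <-. Qed.

Lemma BM_subc f c : BM f -> BM (fun x => f x - c).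
Proof.
move=> hf; apply: (BM_ext _ _ _ (BM_lin 1 (- c) _ _ hf BM_one)) => x.
by rewrite /onefun; ring.
Qed.

Lemma L_lin t c1 c2 f g x : (1 <= t)%N -> BM f -> BM g ->
  L t (fun u => c1 * f u + c2 * g u) x = c1 * L t f x + c2 * L t g x.
Proof.
move=> t1 hf hg; rewrite /Lop.
have hk := intg_kern t x t1.
rewrite -Int_lin; try exact: intg_bm.
by apply: eq_Rintegral => u _; ring.
Qed.

Lemma L_bnd t f c x : (1 <= t)%N -> BM f -> (forall u, `|f u| <= c) ->
  `|L t f x| <= c * L t one x.
Proof.
move=> t1 hf hc; have hk := intg_kern t x t1.
have [_ a0'] := ha _ t1; have [_ b0] := hb _ t1.
rewrite /Lop /onefun.
have -> : Int (fun u => a t x u * b t u (y t) * 1) = Int (fun u => a t x u * b t u (y t)).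
  by apply: eq_Rintegral => u _; rewrite mulr1.
rewrite /Defs.Int -!RintegralZl // -/(Defs.Int mu _) -/(Defs.Int mu _).
rewrite ler_norml; apply/andP; split.
  rewrite /Defs.Int RintegralZl // -mulNr -RintegralZl //.
  apply: le_Rintegral => //; first exact: intgZ.
    exact: (intg_bm _ _ hf hk).
  move=> u _; rewrite mulrC; apply: ler_wpM2l; first by rewrite mulr_ge0.
  by move: (hc u); rewrite ler_norml => /andP[].
apply: le_Rintegral => //; first exact: (intg_bm _ _ hf hk).
  exact: intgZ.
move=> u _; rewrite [c * _]mulrC; apply: ler_wpM2l; first by rewrite mulr_ge0.
by move: (hc u); rewrite ler_norml => /andP[].
Qed.


Lemma L_meas_ge0 t (g : X -> R) : (1 <= t)%N -> measurable_fun setT g -> (forall u, 0 <= g u) ->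
  measurable_fun setT (L t g).
Proof.
move=> t1 mg g0; have [ma a0'] := ha _ t1; have [mb b0] := hb _ t1.
pose F := fun p : X * X => a t p.1 p.2 * b t p.2 (y t) * g p.2.
have mF : measurable_fun setT F.
  apply: measurable_funM; last exact: measurableT_comp mg measurable_snd.
  apply: measurable_funM => //; exact: measurableT_comp mb measurable_snd.
have F0 : forall p, 0 <= F p by move=> p; rewrite !mulr_ge0.
exact: (Int_meas F mF F0).
Qed.

Lemma L_BM t (f : X -> R) : (1 <= t)%N -> BM f -> BM (L t f).
Proof.
move=> t1 hf; have hf' := hf; case: hf' => [mf [M hM]].
set c := `|M|.
have hc : forall u, `|f u| <= c by move=> u; apply: le_trans (hM u) (ler_norm _).
have [[ML hML] Lpos] := hL _ t1.
split; last first.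
  exists (c * ML) => x; apply: le_trans (L_bnd t f c x t1 hf hc) _.
  by apply: ler_wpM2l; [exact: normr_ge0 | exact: hML].
have hg : BM (fun u => f u + c).
  by apply: (BM_ext _ _ _ (BM_lin 1 c _ _ hf BM_one)) => u; rewrite /onefun; ring.
have -> : L t f = fun x => 1 * L t (fun u => f u + c) x + (- c) * L t one x.
  apply/funext => x; rewrite -L_lin //; last exact: BM_one.
  by congr (L t _ x); apply/funext => u; rewrite /onefun; ring.
apply: measurable_funD; apply: measurable_funM => //; apply: L_meas_ge0 => //.
- by case: hg.
- by move=> u; move: (hc u); rewrite ler_norml => /andP[h _]; lra.
- exact: measurable_cst.
Qed.

Local Notation ft := (filt mu a0 a b y).

Definition G t x := b t.+1 x (y t.+1) * Int (fun u => ft t u * a t.+1 u x).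

Lemma filtS t : ft t.+1 = fun x => (Int (G t))^-1 * G t x.
Proof. by apply/funext => x; rewrite mulrC. Qed.

Lemma filt_prop t : [/\ measurable_fun setT (ft t), (forall x, 0 <= ft t x) & intg (ft t)].
Proof.
elim: t => [|t [mf f0 _]].
  split => //; apply/integrableP; split; first exact/measurable_EFinP.
  rewrite (_ : (fun x => _) = fun x => (a0 x)%:E); first by rewrite ia0 ltry.
  by apply/funext => x; rewrite /= ger0_norm.
have t1 : (1 <= t.+1)%N by [].
have [ma a0'] := ha _ t1; have [mb b0] := hb _ t1.
have mG : measurable_fun setT (G t).
  apply: measurable_funM => //.
  pose F := fun p : X * X => ft t p.2 * a t.+1 p.2 p.1.
  have mF : measurable_fun setT F.
    apply: measurable_funM; first exact: measurableT_comp mf measurable_snd.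
    have h := measurableT_comp ma (@measurable_swap _ _ X X).
    exact: h.
  have F0 : forall p, 0 <= F p by move=> p; rewrite mulr_ge0.
  exact: (Int_meas F mF F0).
have G0 : forall x, 0 <= G t x.
  by move=> x; rewrite mulr_ge0 // Rintegral_ge0 // => u _; rewrite mulr_ge0.
have IG0 : 0 <= Int (G t) by apply: Rintegral_ge0 => x _; exact: G0.
rewrite filtS; split.
- exact: measurable_funM.
- by move=> x; rewrite mulr_ge0 // invr_ge0.
case: (boolP ((\int[mu]_x (G t x)%:E)%E \is a fin_num)) => hfin.
  apply: intgZ; apply/integrableP; split; first exact/measurable_EFinP.
  rewrite (_ : (fun x => _) = fun x => (G t x)%:E).
    by rewrite -ge0_fin_numE // integral_ge0 // => x _; rewrite lee_fin.
  by apply/funext => x; rewrite /= ger0_norm.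
have -> : Int (G t) = 0.
  rewrite /Defs.Int /Rintegral; move: hfin.
  by case: (\int[mu]_x (G t x)%:E)%E.
rewrite invr0.
rewrite /intg; apply: (eq_integrable measurableT (cst 0%E)); last exact: integrable0.
by move=> x _; rewrite /= mul0r.
Qed.


Local Notation mt := (mt mu a0 a b y).
Local Notation kappa := (kappa mu a0 a b y).
Local Notation sigma2 := (sigma2 mu a0 a b y).
Local Notation Vt := (Vt mu a0 a b y).
Local Notation Vtt := (Vtt mu a0 a b y).
Local Notation Vup := (Vup mu a0 a b y).

Lemma BM_mul g h : BM g -> BM h -> BM (fun x => g x * h x).
Proof.
move=> [mg [Mg hg]] [mh [Mh hh]]; split; first exact: measurable_funM.
exists (`|Mg| * `|Mh|) => x; rewrite normrM.
apply: ler_pM => //.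
  by apply: le_trans (hg x) (ler_norm _).
by apply: le_trans (hh x) (ler_norm _).
Qed.

Lemma intg_ft t g : BM g -> intg (fun x => g x * ft t x).
Proof.
move=> hg; have [_ _ hi] := filt_prop t.
rewrite (_ : (fun x => g x * ft t x) = fun x => ft t x * g x).
  exact: intg_bm.
by apply/funext => x; rewrite mulrC.
Qed.

Lemma mt_lin t c1 c2 g1 g2 : BM g1 -> BM g2 ->
  mt t (fun x => c1 * g1 x + c2 * g2 x) = c1 * mt t g1 + c2 * mt t g2.
Proof.
move=> h1 h2; rewrite /Defs.mt -Int_lin; try exact: intg_ft.
by apply: eq_Rintegral => x _; ring.
Qed.

Definition Bs t g h := Int (fun x => (g x - mt t g) * (h x - mt t h) * ft t x).

Lemma sigma2_Bs t g : sigma2 t g = Bs t g g.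
Proof. by apply: eq_Rintegral => x _; rewrite expr2. Qed.

Lemma Bs_sym t g h : Bs t g h = Bs t h g.
Proof. by apply: eq_Rintegral => x _; ring. Qed.

Lemma Bs_lin t c1 c2 g1 g2 h : BM g1 -> BM g2 -> BM h ->
  Bs t (fun x => c1 * g1 x + c2 * g2 x) h = c1 * Bs t g1 h + c2 * Bs t g2 h.
Proof.
move=> h1 h2 hh; rewrite /Bs mt_lin // -Int_lin.
- by apply: eq_Rintegral => x _; ring.
- by apply: intg_ft; apply: BM_mul; apply: BM_subc.
- by apply: intg_ft; apply: BM_mul; apply: BM_subc.
Qed.

Definition Phi t g := fun x => L t g x - mt t g * L t one x.

Fixpoint Bv t g h := match t with
  | 0 => Bs 0 g h
  | t'.+1 => Bs t'.+1 g h + (kappa t'.+1)^-2 * Bv t' (Phi t'.+1 g) (Phi t'.+1 h)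
  end.

Lemma Vt_Bv t g : Vt t g = Bv t g g.
Proof.
elim: t g => [|t IH] g /=; first exact: sigma2_Bs.
by rewrite IH sigma2_Bs.
Qed.

Lemma Phi_BM t g : (1 <= t)%N -> BM g -> BM (Phi t g).
Proof.
move=> t1 hg.
apply: (BM_ext _ _ _ (BM_lin 1 (- mt t g) _ _ (L_BM t g t1 hg) (L_BM t one t1 BM_one))).
by move=> x; rewrite /Phi; ring.
Qed.

Lemma Phi_lin t c1 c2 g1 g2 : (1 <= t)%N -> BM g1 -> BM g2 ->
  Phi t (fun x => c1 * g1 x + c2 * g2 x) = fun x => c1 * Phi t g1 x + c2 * Phi t g2 x.
Proof.
move=> t1 h1 h2; apply/funext => x; rewrite /Phi L_lin // mt_lin //; ring.
Qed.

Lemma Bv_sym t g h : Bv t g h = Bv t h g.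
Proof.
elim: t g h => [|t IH] g h /=; first exact: Bs_sym.
by rewrite Bs_sym IH.
Qed.

Lemma Bv_lin t c1 c2 g1 g2 h : BM g1 -> BM g2 -> BM h ->
  Bv t (fun x => c1 * g1 x + c2 * g2 x) h = c1 * Bv t g1 h + c2 * Bv t g2 h.
Proof.
elim: t c1 c2 g1 g2 h => [|t IH] c1 c2 g1 g2 h h1 h2 hh /=; first exact: Bs_lin.
rewrite Bs_lin // Phi_lin // IH; try exact: Phi_BM.
ring.
Qed.

Lemma Bv_linr t c1 c2 g1 g2 h : BM g1 -> BM g2 -> BM h ->
  Bv t h (fun x => c1 * g1 x + c2 * g2 x) = c1 * Bv t h g1 + c2 * Bv t h g2.
Proof.
by move=> h1 h2 hh; rewrite Bv_sym Bv_lin // (Bv_sym t g1) (Bv_sym t g2).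
Qed.

Lemma Vtt_Bv t g h : BM g -> BM h -> Vtt t g h = Bv t g h.
Proof.
move=> hg hh; rewrite /Defs.Vtt !Vt_Bv.
have -> : g \+ h = fun x => 1 * g x + 1 * h x by apply/funext => x; rewrite /= !mul1r.
have hs : BM (fun x => 1 * g x + 1 * h x) by exact: BM_lin.
rewrite Bv_lin // !Bv_linr // (Bv_sym t h g).
lra.
Qed.

Definition Psi t g := L t (fun x => g x - mt t g).

Lemma Psi_BM t g : (1 <= t)%N -> BM g -> BM (Psi t g).
Proof. by move=> t1 hg; apply: L_BM => //; exact: BM_subc. Qed.

Lemma Psi_lin t c1 c2 g1 g2 : (1 <= t)%N -> BM g1 -> BM g2 ->
  Psi t (fun x => c1 * g1 x + c2 * g2 x) = fun x => c1 * Psi t g1 x + c2 * Psi t g2 x.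
Proof.
move=> t1 h1 h2; apply/funext => x; rewrite /Psi mt_lin // -L_lin //; try exact: BM_subc.
by congr (L t _ x); apply/funext => u; ring.
Qed.

Lemma Vup_lin r k c1 c2 g1 g2 h : BM g1 -> BM g2 -> BM h ->
  Vup r k h (fun x => c1 * g1 x + c2 * g2 x) = c1 * Vup r k h g1 + c2 * Vup r k h g2.
Proof.
elim: k c1 c2 g1 g2 => [|k IH] c1 c2 g1 g2 h1 h2 hh /=.
  by rewrite !Vtt_Bv //; [exact: Bv_linr | exact: BM_lin].
have t1 : (1 <= r + k.+1)%N by rewrite addnS.
have := Psi_lin (r + k.+1) c1 c2 g1 g2 t1 h1 h2; rewrite /Psi => ->.
rewrite IH //; try exact: Psi_BM.
ring.
Qed.


Local Notation Vst := (Vst mu a0 a b y).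

Lemma Vtt_sym t g h : Vtt t g h = Vtt t h g.
Proof.
rewrite /Defs.Vtt (_ : g \+ h = h \+ g); first by congr (_ / _); ring.
by apply/funext => x; rewrite /= addrC.
Qed.

Lemma Vst_sym i j g h : Vst i j g h = Vst j i h g.
Proof.
rewrite /Defs.Vst; case: (ltngtP i j) => [lt|gt|->].
- by [].
- by [].
- by rewrite subnn /= Vtt_sym.
Qed.

Lemma qformE K (psi : nat -> X -> R) (l : nat -> R) :
  qform (Vmat mu a0 a b y K psi) (\row_(i < K.+1) l i) =
  \sum_(i < K.+1) \sum_(j < K.+1) l i * Vst i j (psi i) (psi j) * l j.
Proof.
rewrite /qform mxE; apply: eq_bigr => i _; rewrite !mxE big_distrr /=.
by apply: eq_bigr => j _; rewrite !mxE; ring.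
Qed.

Lemma Qsplit K (psi : nat -> X -> R) (l : nat -> R) :
  \sum_(i < K.+1) \sum_(j < K.+1) l i * Vst i j (psi i) (psi j) * l j =
  \sum_(i < K) \sum_(j < K) l i * Vst i j (psi i) (psi j) * l j +
  2 * l K * \sum_(i < K) l i * Vst i K (psi i) (psi K) +
  l K ^+ 2 * Vst K K (psi K) (psi K).
Proof.
rewrite big_ord_recr /=.
under eq_bigr do rewrite big_ord_recr /=.
rewrite big_ord_recr /= big_split /=.
have E1 : \sum_(i < K) l i * Vst i K (psi i) (psi K) * l K =
   l K * \sum_(i < K) l i * Vst i K (psi i) (psi K).
  by rewrite mulr_sumr; apply: eq_bigr => i _; ring.
have E2 : \sum_(i < K) l K * Vst K i (psi K) (psi i) * l i =
   l K * \sum_(i < K) l i * Vst i K (psi i) (psi K).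
  by rewrite mulr_sumr; apply: eq_bigr => i _; rewrite Vst_sym; ring.
rewrite E1 E2; ring.
Qed.


Lemma VstA S i c1 c2 g1 g2 gT : (i <= S)%N -> BM g1 -> BM g2 -> BM gT ->
  Vst i S g1 (fun x => c1 * g2 x + c2 * Psi S.+1 gT x) =
  c1 * Vst i S g1 g2 + c2 * Vup i (S - i) g1 (Psi S.+1 gT).
Proof.
move=> iS h1 h2 hT; rewrite /Defs.Vst iS Vup_lin //; exact: Psi_BM.
Qed.

Lemma VstB S i g1 gT : (i <= S)%N ->
  Vst i S.+1 g1 gT = (kappa S.+1)^-1 * Vup i (S - i) g1 (Psi S.+1 gT).
Proof.
move=> iS; rewrite /Defs.Vst (leq_trans iS (leqnSn S)) subSn //=.
by rewrite addnS subnKC.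
Qed.

Lemma Phi_Psi t g : (1 <= t)%N -> BM g -> Phi t g = Psi t g.
Proof.
move=> t1 hg; apply/funext => x; rewrite /Phi /Psi.
have -> : (fun u => g u - mt t g) = (fun u => 1 * g u + (- mt t g) * one u).
  by apply/funext => u; rewrite /onefun; ring.
by rewrite L_lin //; [ring | exact: BM_one].
Qed.

Lemma main_sec S (psi : nat -> X -> R) (lam : nat -> R) :
  (forall i, (i <= S.+1)%N -> BM (psi i)) ->
  let rho := fun x => lam S * psi S x + lam S.+1 / kappa S.+1 *
      L S.+1 (fun u => psi S.+1 u - mt S.+1 (psi S.+1)) x in
  let psit := fun i => if i == S then rho else psi i in
  let lamt : 'rV[R]_(S.+1) := \row_(i < S.+1) (if val i == S then 1 else lam i) in
  let lamv : 'rV[R]_(S.+2) := \row_(i < S.+2) lam i in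
  qform (Vmat mu a0 a b y S psit) lamt =
  qform (Vmat mu a0 a b y S.+1 psi) lamv - lam S.+1 ^+ 2 * sigma2 S.+1 (psi S.+1).
Proof.
move=> hpsi rho psit lamt lamv.
have t1 : (1 <= S.+1)%N by [].
have hS := hpsi S (leqnSn S); have hT := hpsi S.+1 (leqnn _).
set P := Psi S.+1 (psi S.+1).
have hP : BM P by exact: Psi_BM.
set c := lam S.+1 / kappa S.+1.
have rhoE : rho = fun x => lam S * psi S x + c * P x by [].
have hrho : BM rho by rewrite rhoE; exact: BM_lin.
rewrite (qformE S psit (fun k => if k == S then 1 else lam k)) (qformE S.+1 psi lam).
rewrite (Qsplit S psit (fun k => if k == S then 1 else lam k)) /= eqxx.
rewrite Qsplit (Qsplit S psi lam).
rewrite [\sum_(i < S.+1) lam i * Vst i S.+1 _ _]big_ord_recr /=.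
have Ep : \sum_(i < S) \sum_(j < S) (if nat_of_ord i == S then 1 else lam i) *
    Vst i j (psit i) (psit j) * (if nat_of_ord j == S then 1 else lam j) =
  \sum_(i < S) \sum_(j < S) lam i * Vst i j (psi i) (psi j) * lam j.
  apply: eq_bigr => i _; apply: eq_bigr => j _.
  by rewrite /psit !ltn_eqF.
have Ec : \sum_(i < S) (if nat_of_ord i == S then 1 else lam i) * Vst i S (psit i) (psit S) =
   lam S * \sum_(i < S) lam i * Vst i S (psi i) (psi S) +
   lam S.+1 * \sum_(i < S) lam i * Vst i S.+1 (psi i) (psi S.+1).
  rewrite !mulr_sumr -big_split /=; apply: eq_bigr => i _.
  have iS : (i <= S)%N by exact: ltnW.
  have hi : BM (psi i) by apply: hpsi; exact: (leq_trans iS).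
  rewrite /psit eqxx ltn_eqF // rhoE VstA // VstB //.
  rewrite /c; ring.
rewrite Ep Ec {Ep Ec}.
have hVSS : Vst S S (psit S) (psit S) =
   lam S ^+ 2 * Bv S (psi S) (psi S) + 2 * lam S * c * Bv S (psi S) P + c ^+ 2 * Bv S P P.
  rewrite /psit eqxx rhoE /Defs.Vst leqnn subnn /= Vtt_Bv //.
  rewrite Bv_lin // !Bv_linr // (Bv_sym S P (psi S)); ring.
have hSS : Vst S S (psi S) (psi S) = Bv S (psi S) (psi S).
  by rewrite /Defs.Vst leqnn subnn /= Vtt_Bv.
have hST : Vst S S.+1 (psi S) (psi S.+1) = (kappa S.+1)^-1 * Bv S (psi S) P.
  by rewrite VstB // subnn /= Vtt_Bv.
have hTT : Vst S.+1 S.+1 (psi S.+1) (psi S.+1) =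
    sigma2 S.+1 (psi S.+1) + (kappa S.+1)^-2 * Bv S P P.
  rewrite /Defs.Vst leqnn subnn /= Vtt_Bv //= -sigma2_Bs Phi_Psi //.
rewrite hVSS hSS hST hTT /c -exprVn.
ring.
Qed.

End Dev.

Theorem mainTheorem3 (R : realType) (n : nat)
  (mu : {measure set (n.-tuple R) -> \bar R})
  (a0 : n.-tuple R -> R) (a : nat -> n.-tuple R -> n.-tuple R -> R)
  (Y : Type) (b : nat -> n.-tuple R -> Y -> R) (y : nat -> Y)
  (T : nat) (psi : nat -> n.-tuple R -> R) (lam : nat -> R) :
  (* standing setting: mu sigma-finite, a0 a probability density,
     a_t transition densities, b_t observation densities (nonneg, measurable) *)
  sigma_finite setT mu ->
  measurable_fun setT a0 -> (forall x, 0 <= a0 x) ->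
  (\int[mu]_x (a0 x)%:E = 1)%E ->
  (forall t, (1 <= t)%N ->
     [/\ measurable_fun setT (fun p : n.-tuple R * n.-tuple R => a t p.1 p.2),
         (forall x u, 0 <= a t x u) &
         (forall x, (\int[mu]_u (a t x u)%:E = 1)%E)]) ->
  (forall t, (1 <= t)%N ->
     measurable_fun setT (fun x => b t x (y t)) /\ (forall x, 0 <= b t x (y t))) ->
  (* Assumption A-0 *)
  (forall t, (1 <= t)%N ->
     [/\ (exists M : R, forall x, Lop mu a b y t (@onefun R n) x <= M),
         (forall x, 0 < Lop mu a b y t (@onefun R n) x) &
         0 < kappa mu a0 a b y t]) ->
  (* T >= 1, psi_0..psi_T bounded measurable *)
  (1 <= T)%N ->
  (forall i, (i <= T)%N ->
     measurable_fun setT (psi i) /\ exists M : R, forall x, `|psi i x| <= M) ->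
  let rho := fun x => lam T.-1 * psi T.-1 x +
      lam T / kappa mu a0 a b y T *
      Lop mu a b y T (fun u => psi T u - mt mu a0 a b y T (psi T)) x in
  let psit := fun i => if i == T.-1 then rho else psi i in
  let lamt : 'rV[R]_(T.-1.+1) := \row_(i < T.-1.+1) (if val i == T.-1 then 1 else lam i) in
  let lamv : 'rV[R]_(T.+1) := \row_(i < T.+1) lam i in
  qform (Vmat mu a0 a b y T.-1 psit) lamt =
  qform (Vmat mu a0 a b y T psi) lamv - lam T ^+ 2 * sigma2 mu a0 a b y T (psi T).
Proof.
move=> smu ma0 a00 ia0 ha hb hL T1 hpsi.
case: T T1 hpsi => [//|S] _ hpsi.
have ha' : forall t, (1 <= t)%N ->
  measurable_fun setT (fun p : n.-tuple R * n.-tuple R => a t p.1 p.2) /\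
  (forall x u, 0 <= a t x u).
  by move=> t t1; have [h1 h2 _] := ha t t1; split.
have hL' : forall t, (1 <= t)%N ->
  (exists M : R, forall x, Lop mu a b y t (@onefun R n) x <= M) /\
  (forall x, 0 < Lop mu a b y t (@onefun R n) x).
  by move=> t t1; have [h1 h2 _] := hL t t1; split.
exact: (@main_sec R n mu a0 a Y b y smu ma0 a00 ia0 ha' hb hL' S psi lam hpsi).
Qed.
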